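(* Let $1\le q<2$ and let $C_q$ and $\mathbf{T}_1$ be as in the context. If $\mathbf{y}\in\mathbb{R}^d\setminus\{\mathbf{x}_1,\dots,\mathbf{x}_m\}$, then $C_q(\mathbf{T}_1(\mathbf{y}))\le C_q(\mathbf{y})$, with equality only when $\mathbf{T}_1(\mathbf{y})=\mathbf{y}$.
   Context: Let $\mathbf{x}_1,\dots,\mathbf{x}_m\in\mathbb{R}^d$ be distinct data points, not all lying on a common affine line, and let $\eta_1,\dots,\eta_m>0$ be weights. For $1\le q<2$ define the cost $C_q(\mathbf{y})=\sum_{i=1}^m \eta_i^q\|\mathbf{y}-\mathbf{x}_i\|^q$ ($\|\cdot\|$ the Euclidean norm); it is strictly convex with a unique minimizer $\mathbf{M}$. For $\mathbf{y}\notin\{\mathbf{x}_i\}_{i=1}^m$ define the Weiszfeld map $\mathbf{T}_1(\mathbf{y})=\dfrac{\sum_{i=1}^m \eta_i^q\|\mathbf{y}-\mathbf{x}_i\|^{q-2}\mathbf{x}_i}{\sum_{i=1}^m \eta_i^q\|\mathbf{y}-\mathbf{x}_i\|^{q-2}}$. *)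

(* Defs.v *)
From mathcomp Require Import all_boot all_order all_algebra.
From mathcomp Require Import all_classical all_reals all_analysis.
Set Implicit Arguments. Unset Strict Implicit. Unset Printing Implicit Defensive.
Import Order.TTheory GRing.Theory Num.Theory.
Local Open Scope ring_scope.

Definition enorm (R : realType) (d : nat) (v : 'rV[R]_d) : R :=
  Num.sqrt (\sum_(j < d) v ord0 j ^+ 2).

Definition Cq (R : realType) (d m : nat) (q : R)
  (x : 'I_m -> 'rV[R]_d) (eta : 'I_m -> R) (y : 'rV[R]_d) : R :=
  \sum_(i < m) powR (eta i) q * powR (enorm (y - x i)) q.

(* Weiszfeld map T_1(y); used only for y not among the x_i. *)
Definition T1 (R : realType) (d m : nat) (q : R)
  (x : 'I_m -> 'rV[R]_d) (eta : 'I_m -> R) (y : 'rV[R]_d) : 'rV[R]_d :=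
  (\sum_(i < m) powR (eta i) q * powR (enorm (y - x i)) (q - 2))^-1 *:
  \sum_(i < m) ((powR (eta i) q * powR (enorm (y - x i)) (q - 2)) *: x i).

Definition on_common_line (R : realType) (d m : nat) (x : 'I_m -> 'rV[R]_d) : Prop :=
  exists (a b : 'rV[R]_d), forall i : 'I_m, exists t : R, x i = a + t *: b.

(* Main.v *)
Require Import Defs.
From mathcomp Require Import all_boot all_order all_algebra.
From mathcomp Require Import all_classical all_reals all_analysis.
From mathcomp Require Import ring lra.
Import Order.TTheory GRing.Theory Num.Theory.
Local Open Scope ring_scope.
Lemma young_step (R : realType) (a b q : R) : 0 < a -> 0 <= b -> 1 <= q -> q < 2 ->
  b `^ q <= (1 - q/2) * a `^ q + q/2 * (a `^ (q-2) * b^+2).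
Proof.
move=> a0 b0 q1 q2.
have q0 : 0 < q by lra.
set p := 2 / q. set r := 2 / (2 - q).
have p0 : 0 < p by rewrite /p divr_gt0 //; lra.
have r0 : 0 < r by rewrite /r divr_gt0 //; lra.
have pr : p^-1 + r^-1 = 1 by rewrite /p /r !invf_div; field; lra.
set X := b `^ q * a `^ (q * (q-2) / 2).
set Y := a `^ (q * (2 - q) / 2).
have XY : X * Y = b `^ q.
  rewrite /X /Y -mulrA -powRD; last by apply/implyP => _; rewrite gt_eqF.
  have -> : q * (q - 2) / 2 + q * (2 - q) / 2 = 0 by field.
  by rewrite powRr0 mulr1.
have := conjugate_powR (mulr_ge0 (powR_ge0 b q) (powR_ge0 a _) : 0 <= X) (powR_ge0 a _ : 0 <= Y) p0 r0 pr.
rewrite XY /X /Y powRM ?powR_ge0 // -!powRrM.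
have -> : q * p = 2%:R by rewrite /p; field; lra.
have -> : q * (q - 2) / 2 * p = q - 2 by rewrite /p; field; lra.
have -> : q * (2 - q) / 2 * r = q by rewrite /r; field; lra.
rewrite powR_mulrn //.
have -> : p^-1 = q/2 by rewrite /p invf_div.
have -> : r^-1 = 1 - q/2 by rewrite /r invf_div; field; lra.
move=> H; apply: (le_trans H); rewrite le_eqVlt; apply/orP; left; apply/eqP; ring.
Qed.
Lemma enorm_sq (R : realType) d (v : 'rV[R]_d) : enorm v ^+ 2 = \sum_j v ord0 j ^+ 2.
Proof. by rewrite /enorm sqr_sqrtr // sumr_ge0 // => j _; rewrite sqr_ge0. Qed.

Lemma enorm_eq0 (R : realType) d (v : 'rV[R]_d) : enorm v = 0 -> v = 0.
Proof.
move=> h; have : \sum_j v ord0 j ^+ 2 = 0 by rewrite -enorm_sq h expr0n.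
move/psumr_eq0P => H; apply/matrixP => i j; rewrite (ord1 i) mxE.
by apply/eqP; rewrite -sqrf_eq0; apply/eqP; apply: H => // k _; rewrite sqr_ge0.
Qed.

Lemma key_identity (R: realType) d m (w : 'I_m -> R) (x : 'I_m -> 'rV[R]_d) (z : 'rV_d) :
  \sum_i w i != 0 ->
  \sum_i w i * enorm (z - x i) ^+ 2 =
  \sum_i w i * enorm ((\sum_i w i)^-1 *: \sum_i (w i *: x i) - x i) ^+2
   + (\sum_i w i) * enorm (z - (\sum_i w i)^-1 *: \sum_i (w i *: x i)) ^+ 2.
Proof.
set W := \sum_i w i => W0; set T := W^-1 *: _.
have Tj j : T ord0 j = W^-1 * \sum_i w i * x i ord0 j.
  by rewrite /T !mxE summxE; congr (_ * _); apply eq_bigr => i _; rewrite mxE.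
have cross j : \sum_i w i * (T ord0 j - x i ord0 j) = 0.
  transitivity (W * T ord0 j - \sum_i w i * x i ord0 j).
    by rewrite /W mulr_suml -sumrB; apply eq_bigr => i _; ring.
  by rewrite Tj mulrA mulfV // mul1r subrr.
under eq_bigr => i _ do rewrite enorm_sq.
under [X in _ = X + _]eq_bigr => i _ do rewrite enorm_sq.
rewrite enorm_sq.
have E i j: (z - x i) ord0 j ^+2 = (T - x i) ord0 j ^+2 + (z - T) ord0 j ^+2
   + 2 * (z-T) ord0 j * (T ord0 j - x i ord0 j) by rewrite !mxE; ring.
transitivity (\sum_i (w i * \sum_j (T - x i) ord0 j ^+2 + w i * \sum_j (z-T) ord0 j ^+2
   + \sum_j 2 * (z-T) ord0 j * (w i * (T ord0 j - x i ord0 j)))).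
  apply eq_bigr => i _; rewrite (eq_bigr _ (fun j _ => E i j)) !big_split /= !mulrDr.
  by congr (_ + _); rewrite mulr_sumr; apply eq_bigr => j _; ring.
rewrite !big_split /= [X in _ + _ + X]exchange_big /=.
rewrite [X in _ + _ + X]big1 ?addr0; last first.
  by move=> j _; rewrite -mulr_sumr cross mulr0.
by rewrite -mulr_suml.
Qed.

Theorem theorem1 (R : realType) (d m : nat) (q : R)
  (x : 'I_m -> 'rV[R]_d) (eta : 'I_m -> R)
  (hq1 : 1 <= q) (hq2 : q < 2)
  (hdistinct : injective x)
  (hnotline : ~ on_common_line x)
  (heta : forall i, 0 < eta i)
  (y : 'rV[R]_d) (hy : forall i, y != x i) :
  Cq q x eta (T1 q x eta y) <= Cq q x eta y /\
  (Cq q x eta (T1 q x eta y) = Cq q x eta y -> T1 q x eta y = y).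
Proof.
have m0 : (0 < m)%N.
  case: (posnP m) => // m0; exfalso; apply: hnotline; exists 0, 0 => i.
  by exfalso; have := ltn_ord i; move=> /leq_trans/(_ (eq_leq m0)).
set i0 : 'I_m := Ordinal m0.
have a0 i : 0 < enorm (y - x i).
  rewrite lt_neqAle sqrtr_ge0 andbT; apply/eqP => /esym /enorm_eq0 /eqP.
  by rewrite subr_eq0 (negPf (hy i)).
set w := fun i => powR (eta i) q * powR (enorm (y - x i)) (q - 2).
have w0 i : 0 < w i by rewrite mulr_gt0 ?powR_gt0.
have W0 : 0 < \sum_i w i.
  rewrite (bigD1 i0) //=; have := w0 i0.
  have : 0 <= \sum_(i | i != i0) w i by rewrite sumr_ge0 // => i _; rewrite ltW.
  lra.
have K := @key_identity R d m w x y (lt0r_neq0 W0).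
have TE : T1 q x eta y = (\sum_i w i)^-1 *: \sum_i (w i *: x i) by [].
rewrite -TE in K.
set T := T1 q x eta y in K TE *.
have Cy : Cq q x eta y = \sum_i w i * enorm (y - x i) ^+ 2.
  rewrite /Cq; apply: eq_bigr => i _; rewrite /w -mulrA -powR_mulrn ?sqrtr_ge0 //.
  rewrite -powRD; last by apply/implyP => _; rewrite gt_eqF.
  by rewrite subrK.
have CT : Cq q x eta T <= (1 - q/2) * Cq q x eta y + q/2 * \sum_i w i * enorm (T - x i) ^+ 2.
  rewrite /Cq !mulr_sumr -big_split /=; apply: ler_sum => i _.
  have := @young_step R _ _ q (a0 i) (sqrtr_ge0 _ : 0 <= enorm (T - x i)) hq1 hq2.
  move/(ler_wpM2l (powR_ge0 (eta i) q)); rewrite /w => H; apply: (le_trans H).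
  by rewrite le_eqVlt; apply/orP; left; apply/eqP; ring.
have N0 : 0 <= enorm (y - T) ^+ 2 by rewrite sqr_ge0.
rewrite -Cy in K.
move: CT N0 K; set A := Cq q x eta T; set B := Cq q x eta y; set S := \sum_i w i * enorm (T - x i) ^+ 2.
set W := \sum_i w i; set N := enorm (y - T) ^+ 2 => CT N0 K.
have Wp : 0 < W := W0.
have q0 : 0 < q by lra.
have H1 : A <= B - q/2 * (W * N).
  apply: (le_trans CT); by rewrite K le_eqVlt; apply/orP; left; apply/eqP; ring.
have H2 : 0 <= q/2 * (W * N) by apply: mulr_ge0; [apply: divr_ge0; lra | apply: mulr_ge0; lra].
have hq : q / 2 != 0 by rewrite mulf_neq0 ?invr_neq0 ?(lt0r_neq0 q0).
split; first lra.
move=> AB.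
have : q/2 * (W * N) = 0 by lra.
move/eqP; rewrite mulf_eq0 (negPf hq) /= mulf_eq0 (negPf (lt0r_neq0 Wp)) /= /N sqrf_eq0.
move=> /eqP/enorm_eq0/eqP; rewrite subr_eq0 => /eqP ->; done.
Qed.
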